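(* Let $S$ be a monoid whose unique maximal right ideal $\mathfrak{M}$ is two-sided, and let $A$ be a right $S$-act having a maximal subact $B$ such that there exists $a\in A\setminus B$ with $\mathfrak{M}=\{s\in S\mid as\in B\}$. Then: (1) for every proper right ideal $I$ of $S$ with $I^2=I$ we have $AI\not\cong A$ (as $S$-acts); (2) for every right ideal $I$ of $S$, $AI=A$ if and only if $I=S$; (3) for every right ideal $I$ of $S$ with $I^2=I$, $AI\cong A$ if and only if $I=S$.
   Context: $S$ is a monoid with identity $1$ having at least one right non-invertible element. A (right) $S$-act is a nonempty set with an action $(a,s)\mapsto as$, $a1=a$, $a(st)=(as)t$; a subact is a nonempty subset closed under the action; a maximal subact is a proper subact not properly contained in another proper subact. $\mathfrak{M}=\{s\in S\mid st\neq1\ \forall t\in S\}$ is the unique maximal right ideal. $AI=\{as\mid a\in A,s\in I\}$ (a subact of $A$), $I^2=\{st\mid s,t\in I\}$. Isomorphism means bijective map $f$ with $f(as)=f(a)s$. *)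

(* Defs.v *)
Set Implicit Arguments.

Record monoid := Monoid {
  mcar :> Type;
  mmul : mcar -> mcar -> mcar;
  mone : mcar;
  mmulA : forall x y z, mmul x (mmul y z) = mmul (mmul x y) z;
  mmul1s : forall x, mmul mone x = x;
  mmuls1 : forall x, mmul x mone = x
}.

Record act (S : monoid) := Act {
  acar :> Type;
  aop : acar -> S -> acar;
  aop1 : forall a, aop a (mone S) = a;
  aopM : forall a s t, aop a (mmul S s t) = aop (aop a s) t;
  anonempty : inhabited acar
}.

Section Defs.
Variable S : monoid.

Definition right_invertible (s : S) : Prop := exists t, mmul S s t = mone S.

Definition Mfrak (s : S) : Prop := forall t : S, mmul S s t <> mone S.

Definition right_ideal (I : S -> Prop) : Prop :=
  (exists s, I s) /\ forall s t, I s -> I (mmul S s t).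

Definition two_sided_ideal (I : S -> Prop) : Prop :=
  right_ideal I /\ forall s t, I s -> I (mmul S t s).

Definition proper_subset {T : Type} (P : T -> Prop) : Prop := exists x, ~ P x.

Definition idempotent_ideal (I : S -> Prop) : Prop :=
  forall s, I s <-> exists u v, I u /\ I v /\ s = mmul S u v.

Variable A : act S.

Definition subact (B : A -> Prop) : Prop :=
  (exists x, B x) /\ forall x s, B x -> B (aop A x s).

Definition maximal_subact (B : A -> Prop) : Prop :=
  subact B /\ proper_subset B /\
  forall C : A -> Prop, subact C -> proper_subset C ->
    (forall x, B x -> C x) -> forall x, C x -> B x.

Definition actI (I : S -> Prop) (x : A) : Prop :=
  exists a s, I s /\ x = aop A a s.

(* the subact P of A is isomorphic (as S-act) to A: a bijection f : P -> A
   with f (x s) = f(x) s; f is represented by a total function on A whose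
   restriction to P is the isomorphism *)
Definition subact_iso_to_whole (P : A -> Prop) : Prop :=
  exists f : A -> A,
    (forall x s, P x -> f (aop A x s) = aop A (f x) s) /\
    (forall x y, P x -> P y -> f x = f y -> x = y) /\
    (forall y, exists x, P x /\ f x = y).

End Defs.

(* Main.v *)
Require Import Defs.
From Stdlib Require Import Classical.

Lemma ideal_in_M (S : monoid) (I : S -> Prop) :
  right_ideal S I -> proper_subset I -> forall s, I s -> Mfrak S s.
Proof.
  intros [_ HI] [s0 Hs0] s Hs t Ht.
  apply Hs0. rewrite <- (mmul1s S s0). rewrite <- Ht. apply HI. apply HI. exact Hs.
Qed.

Lemma key (S : monoid) (A : act S) (B : A -> Prop) (a : A) :
  two_sided_ideal S (Mfrak S) ->
  maximal_subact A B -> ~ B a ->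
  (forall s : S, Mfrak S s <-> B (aop A a s)) ->
  forall y v, Mfrak S v -> aop A y v = a -> False.
Proof.
  intros [_ H2] [[_ HB] [_ Hmax]] Ha HM y v Hv Hy.
  destruct (classic (B y)) as [By|nBy].
  { apply Ha. rewrite <- Hy. apply HB. exact By. }
  set (C := fun x => B x \/ exists w, x = aop A a w).
  assert (HC : subact A C).
  { split. exists a. right. exists (mone S). now rewrite aop1.
    intros x s [Bx|[w ->]]. left; now apply HB.
    right. exists (mmul S w s). now rewrite aopM. }
  destruct (classic (proper_subset C)) as [Pc|nPc].
  { apply Ha. apply (Hmax C HC Pc). intros x Bx; now left. right. exists (mone S). now rewrite aop1. }
  assert (Cy : C y).
  { apply NNPP. intro n. apply nPc. exists y. exact n. }
  destruct Cy as [By|[w Hw]]. contradiction.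
  apply Ha. rewrite <- Hy, Hw, <- aopM.
  apply HM. apply H2. exact Hv.
Qed.

Theorem proposition3p1 (S : monoid) (A : act S) (B : A -> Prop) (a : A) :
  (exists s : S, ~ right_invertible S s) ->
  two_sided_ideal S (Mfrak S) ->
  maximal_subact A B ->
  ~ B a ->
  (forall s : S, Mfrak S s <-> B (aop A a s)) ->
  (forall I : S -> Prop, right_ideal S I -> proper_subset I -> idempotent_ideal S I ->
      ~ subact_iso_to_whole A (actI A I)) /\
  (forall I : S -> Prop, right_ideal S I ->
      ((forall x : A, actI A I x) <-> (forall s : S, I s))) /\
  (forall I : S -> Prop, right_ideal S I -> idempotent_ideal S I ->
      (subact_iso_to_whole A (actI A I) <-> (forall s : S, I s))).
Proof.
  intros _ H2 Hmax Ha HM.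
  assert (P1 : forall I : S -> Prop, right_ideal S I -> proper_subset I -> idempotent_ideal S I ->
      ~ subact_iso_to_whole A (actI A I)).
  { intros I HI Hp Hid [f [Hf [_ Hsurj]]].
    destruct (Hsurj a) as [x [[b [s [Is ->]]] Hx]].
    destruct (proj1 (Hid s) Is) as [u [v [Iu [Iv ->]]]].
    rewrite aopM in Hx. rewrite Hf in Hx.
    2:{ exists b, u. split; auto. }
    exact (@key _ _ _ _ H2 Hmax Ha HM _ _ (@ideal_in_M _ _ HI Hp v Iv) Hx). }
  split; [exact P1|split].
  - intros I HI. split.
    + intros Hall. apply NNPP. intro n. apply not_all_ex_not in n.
      destruct (Hall a) as [b [s [Is Hb]]].
      exact (@key _ _ _ _ H2 Hmax Ha HM b s (@ideal_in_M _ _ HI n s Is) (eq_sym Hb)).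
    + intros Hall x. exists x, (mone S). split; auto. now rewrite aop1.
  - intros I HI Hid. split.
    + intros Hiso. apply NNPP. intro n. apply not_all_ex_not in n.
      exact (P1 I HI n Hid Hiso).
    + intros Hall. exists (fun x => x). split; [|split].
      * reflexivity.
      * auto.
      * intros y. exists y. split; auto. exists y, (mone S). split; auto. now rewrite aop1.
Qed.
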